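(* Let $\{f_i\}_{i\in I}$ be a frame for a Hilbert space $\mathbb H$ with frame operator $S$ and canonical dual frame $\{\tilde f_i\}_{i\in I}$, $\tilde f_i=S^{-1}f_i$. Then for every subset $J\subset I$ and every $f\in\mathbb H$, $$\sum_{i\in J}|\langle f,f_i\rangle|^2-\sum_{i\in I}|\langle S_Jf,\tilde f_i\rangle|^2=\sum_{i\in J^c}|\langle f,f_i\rangle|^2-\sum_{i\in I}|\langle S_{J^c}f,\tilde f_i\rangle|^2,$$ where $J^c=I\setminus J$.
   Context: A family $\{f_i\}_{i\in I}$ in a Hilbert space $\mathbb H$ is a frame if there are constants $0<A\le B<\infty$ with $A\|f\|^2\le\sum_{i\in I}|\langle f,f_i\rangle|^2\le B\|f\|^2$ for all $f\in\mathbb H$; it is a Bessel sequence if only the upper inequality holds. Its frame operator is $Sf=\sum_{i\in I}\langle f,f_i\rangle f_i$ (bounded, positive, invertible for a frame). For $J\subset I$, $S_Jf=\sum_{i\in J}\langle f,f_i\rangle f_i$. *)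

(* Defs.v *)
From HB Require Import structures.
From mathcomp Require Import all_boot all_order all_algebra.
From mathcomp Require Import all_classical all_reals all_analysis.
From mathcomp Require Import complex.
Set Implicit Arguments. Unset Strict Implicit. Unset Printing Implicit Defensive.
Import Order.TTheory GRing.Theory Num.Theory.
Local Open Scope classical_set_scope.
Local Open Scope ring_scope.

Notation cnorm := Normc.normc.
Notation cRe := complex.Re.

Section Frames.
Variable R : realType.
Variable V : lmodType R[i].
Variable ip : V -> V -> R[i].

Definition hnorm (u : V) : R := Num.sqrt (cRe (ip u u)).

Definition is_hilbert : Prop :=
  [/\ (forall (a : R[i]) (u v w : V), ip (a *: u + v) w = a * ip u w + ip v w),
      (forall u v : V, ip v u = conjc (ip u v)),
      (forall u : V, 0 <= ip u u),
      (forall u : V, ip u u = 0 -> u = 0) &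
      (forall s : nat -> V,
          (forall e : R, 0 < e -> exists N : nat, forall m n : nat,
               (N <= m)%N -> (N <= n)%N -> hnorm (s m - s n) < e) ->
          exists l : V, forall e : R, 0 < e -> exists N : nat, forall n : nat,
               (N <= n)%N -> hnorm (s n - l) < e)].

Variable I : choiceType.

(* unconditional convergence in V of sum_{i in J} F i to v
   (convergence of the net of finite partial sums) *)
Definition has_sum (F : I -> V) (J : set I) (v : V) : Prop :=
  forall e : R, 0 < e -> exists A0 : set I,
    [/\ finite_set A0, A0 `<=` J &
        forall A : set I, finite_set A -> A0 `<=` A -> A `<=` J ->
          hnorm (v - \sum_(i \in A) F i) < e].

Definition sq_coef_sum (f : I -> V) (J : set I) (g : V) : \bar R :=
  (\esum_(i in J) ((cnorm (ip g (f i))) ^+ 2)%:E)%E.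

Definition is_frame (f : I -> V) : Prop :=
  exists A B : R, [/\ 0 < A, A <= B &
    forall g : V, ((A * hnorm g ^+ 2)%:E <= sq_coef_sum f setT g)%E /\
                  (sq_coef_sum f setT g <= (B * hnorm g ^+ 2)%:E)%E].

(* S_J g = sum_{i in J} <g, f i> f i  (the value of the unconditionally
   convergent series, selected by choice) *)
Definition frame_op_on (f : I -> V) (J : set I) (g : V) : V :=
  xget 0 [set v | has_sum (fun i => ip g (f i) *: f i) J v].

Definition frame_op (f : I -> V) : V -> V := frame_op_on f setT.

(* inverse of an operator T (meaningful when T is bijective) *)
Definition op_inv (T : V -> V) (g : V) : V := xget 0 [set h | T h = g].

Definition canonical_dual (f : I -> V) (i : I) : V :=
  op_inv (frame_op f) (f i).

End Frames.

(* Main.v *)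
Require Import Defs.
From HB Require Import structures.
From mathcomp Require Import all_boot all_order all_algebra.
From mathcomp Require Import all_classical all_reals all_analysis.
From mathcomp Require Import complex.
From mathcomp Require Import ring lra.
Import Order.TTheory GRing.Theory Num.Theory.
Local Open Scope classical_set_scope.
Local Open Scope ring_scope.
Set Implicit Arguments. Unset Strict Implicit. Unset Printing Implicit Defensive.

Notation cIm := complex.Im.
Section Cplx.
Variable R : realType.
Implicit Types z w : R[i].

Definition nsq z : R := cRe z ^+ 2 + cIm z ^+ 2.

Lemma ReD z w : cRe (z + w) = cRe z + cRe w. Proof. by case: z; case: w. Qed.
Lemma ImD z w : cIm (z + w) = cIm z + cIm w. Proof. by case: z; case: w. Qed.
Lemma ReN z : cRe (- z) = - cRe z. Proof. by case: z. Qed.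
Lemma ImN z : cIm (- z) = - cIm z. Proof. by case: z. Qed.
Lemma ReB z w : cRe (z - w) = cRe z - cRe w. Proof. by rewrite ReD ReN. Qed.
Lemma ImB z w : cIm (z - w) = cIm z - cIm w. Proof. by rewrite ImD ImN. Qed.
Lemma ReM z w : cRe (z * w) = cRe z * cRe w - cIm z * cIm w. Proof. by case: z; case: w. Qed.
Lemma ImM z w : cIm (z * w) = cRe z * cIm w + cIm z * cRe w.
Proof. by case: z => a b; case: w => c d /=; rewrite addrC. Qed.
Lemma ReJ z : cRe (conjc z) = cRe z. Proof. by case: z. Qed.
Lemma ImJ z : cIm (conjc z) = - cIm z. Proof. by case: z. Qed.
Lemma Re0 : cRe (0 : R[i]) = 0. Proof. by []. Qed.
Lemma Im0 : cIm (0 : R[i]) = 0. Proof. by []. Qed.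
Lemma Re1 : cRe (1 : R[i]) = 1. Proof. by []. Qed.
Lemma Im1 : cIm (1 : R[i]) = 0. Proof. by []. Qed.
Lemma ReC (a : R) : cRe (a%:C)%C = a. Proof. by []. Qed.
Lemma ImC (a : R) : cIm (a%:C)%C = 0. Proof. by []. Qed.
Lemma Rei : cRe ('i%C : R[i]) = 0. Proof. by []. Qed.
Lemma Imi : cIm ('i%C : R[i]) = 1. Proof. by []. Qed.
Lemma cplx_eq z w : cRe z = cRe w -> cIm z = cIm w -> z = w.
Proof. by case: z; case: w => /= a b c d -> ->. Qed.
Lemma cnorm2 z : cnorm z ^+ 2 = nsq z.
Proof. by case: z => a b; rewrite /= sqr_sqrtr // addr_ge0 // sqr_ge0. Qed.
Lemma nsq_ge0 z : 0 <= nsq z.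
Proof. by rewrite /nsq addr_ge0 // sqr_ge0. Qed.
Lemma ge0_cplx z : 0 <= z -> cIm z = 0 /\ 0 <= cRe z.
Proof. by case: z => a b; rewrite lecE /= => /andP[/eqP -> ->]. Qed.

Definition cE := (ReD, ImD, ReN, ImN, ReM, ImM, ReJ, ImJ, Re0, Im0, Re1, Im1, ReC, ImC, Rei, Imi).
End Cplx.

Section FSum.
Variable (I : choiceType).

Lemma fsplit (M : nmodType) (G : I -> M) (A B : set I) :
  finite_set B -> A `<=` B ->
  \sum_(i \in B) G i = \sum_(i \in A) G i + \sum_(i \in B `\` A) G i.
Proof. by move=> fB AB; rewrite (fsbigID A) // setIidr // setDE. Qed.

Lemma fsubB (M : zmodType) (G : I -> M) (A B : set I) :
  finite_set B -> A `<=` B ->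
  \sum_(i \in B) G i - \sum_(i \in A) G i = \sum_(i \in B `\` A) G i.
Proof. by move=> fB AB; rewrite (fsplit G fB AB) addrC addKr. Qed.

Lemma fsum_mono (R : realType) (G : I -> R) (A B : set I) :
  finite_set B -> A `<=` B -> (forall i, B i -> 0 <= G i) ->
  \sum_(i \in A) G i <= \sum_(i \in B) G i.
Proof.
move=> fB AB G0; rewrite (fsplit G fB AB) lerDl.
by apply: fsumr_ge0 => i [Bi _]; exact: G0.
Qed.


Lemma fsumD (M : nmodType) (G H : I -> M) (A : set I) : finite_set A ->
  \sum_(i \in A) (G i + H i) = \sum_(i \in A) G i + \sum_(i \in A) H i.
Proof. by move=> fA; rewrite !fsbig_finite // big_split. Qed.

Lemma fsumZ (K : pzRingType) (M : lmodType K) (G : I -> M) (A : set I) a :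
  finite_set A -> \sum_(i \in A) a *: G i = a *: \sum_(i \in A) G i.
Proof. by move=> fA; rewrite !fsbig_finite // scaler_sumr. Qed.

Lemma fsum_morph (M N : nmodType) (h : M -> N) (G : I -> M) (A : set I) :
  finite_set A -> h 0 = 0 -> (forall x y, h (x + y) = h x + h y) ->
  h (\sum_(i \in A) G i) = \sum_(i \in A) h (G i).
Proof.
move=> fA h0 hD; rewrite !fsbig_finite //.
elim: (finmap.enum_fset (fset_set A)) => [|x r IH]; first by rewrite !big_nil.
by rewrite !big_cons hD IH.
Qed.

Lemma fsum_le (R : realType) (G H : I -> R) (A : set I) : finite_set A ->
  (forall i, A i -> G i <= H i) -> \sum_(i \in A) G i <= \sum_(i \in A) H i.
Proof.
move=> fA GH; rewrite !fsbig_finite //; rewrite big_seq_cond [X in _ <= X]big_seq_cond.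
by apply: ler_sum => i /andP[]; rewrite in_fset_set // inE => /GH.
Qed.
End FSum.

Section IP.
Variables (R : realType) (V : lmodType R[i]) (ip : V -> V -> R[i]).
Hypothesis ipL : forall a u v w, ip (a *: u + v) w = a * ip u w + ip v w.
Hypothesis ipJ : forall u v, ip v u = conjc (ip u v).
Hypothesis ipP : forall u, 0 <= ip u u.
Hypothesis ipE : forall u, ip u u = 0 -> u = 0.

Lemma ipD u v w : ip (u + v) w = ip u w + ip v w.
Proof. by have := ipL 1 u v w; rewrite scale1r mul1r. Qed.
Lemma ip0 w : ip 0 w = 0.
Proof. by have := ipD 0 0 w; rewrite addr0 => /eqP; rewrite -subr_eq subrr eq_sym => /eqP. Qed.
Lemma ipZ a u w : ip (a *: u) w = a * ip u w.
Proof. by rewrite -[a *: u]addr0 ipL ip0 addr0. Qed.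
Lemma ipN u w : ip (- u) w = - ip u w.
Proof. by rewrite -scaleN1r ipZ mulN1r. Qed.
Lemma ipB u v w : ip (u - v) w = ip u w - ip v w.
Proof. by rewrite ipD ipN. Qed.
Lemma ReJip u v : cRe (ip v u) = cRe (ip u v). Proof. by rewrite ipJ ReJ. Qed.
Lemma ImJip u v : cIm (ip v u) = - cIm (ip u v). Proof. by rewrite ipJ ImJ. Qed.
Lemma ipDr u v w : ip w (u + v) = ip w u + ip w v.
Proof.
apply: cplx_eq.
  by rewrite (ReJip (u+v)) ipD !ReD (ReJip u) (ReJip v).
by rewrite (ImJip (u+v)) ipD !ImD (ImJip u) (ImJip v) opprD.
Qed.
Lemma ip0r w : ip w 0 = 0.
Proof. by apply: cplx_eq; rewrite ?(ReJip 0) ?(ImJip 0) ip0 ?oppr0. Qed.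
Lemma ipZr a u w : ip w (a *: u) = conjc a * ip w u.
Proof.
apply: cplx_eq.
  rewrite (ReJip (a *: u)) ipZ !ReM (ReJip u) (ImJip u) ReJ ImJ; lra.
rewrite (ImJip (a *: u)) ipZ !ImM (ReJip u) (ImJip u) ReJ ImJ; lra.
Qed.
Lemma ipNr u w : ip w (- u) = - ip w u.
Proof. rewrite -scaleN1r ipZr; apply: cplx_eq; rewrite !cE; lra. Qed.
Lemma ipBr u v w : ip w (u - v) = ip w u - ip w v.
Proof. by rewrite ipDr ipNr. Qed.
Lemma ip_sum (T : Type) (r : seq T) (P : pred T) (F : T -> V) w :
  ip (\sum_(i <- r | P i) F i) w = \sum_(i <- r | P i) ip (F i) w.
Proof.
elim: r => [|x r IH]; first by rewrite !big_nil ip0.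
by rewrite !big_cons; case: (P x); rewrite ?ipD IH.
Qed.

Definition nn u := cRe (ip u u).
Lemma ImII u : cIm (ip u u) = 0. Proof. by case: (ge0_cplx (ipP u)). Qed.
Lemma nn_ge0 u : 0 <= nn u. Proof. by case: (ge0_cplx (ipP u)). Qed.
Lemma nn_eq0 u : nn u = 0 -> u = 0.
Proof. by move=> h; apply: ipE; apply: cplx_eq; rewrite ?ImII // h. Qed.

Lemma nnD u v : nn (u + v) = nn u + 2 * cRe (ip u v) + nn v.
Proof. rewrite /nn ipD !ipDr !ReD (ReJip u v); lra. Qed.
Lemma nnN u : nn (- u) = nn u.
Proof. by rewrite /nn ipN ipNr opprK. Qed.
Lemma nnB u v : nn (u - v) = nn u - 2 * cRe (ip u v) + nn v.
Proof. rewrite nnD nnN ipNr ReN; lra. Qed.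
Lemma nnZ a u : nn (a *: u) = nsq a * nn u.
Proof.
rewrite /nn ipZ ipZr /nsq !cE ImII; case: a => x y /=; lra.
Qed.
Lemma ReipZ a u v : cRe (ip (a *: u) v) = cRe a * cRe (ip u v) - cIm a * cIm (ip u v).
Proof. by rewrite ipZ ReM. Qed.

Lemma ip_amgm u v t : 2 * t * cRe (ip u v) <= t ^+ 2 * nn u + nn v.
Proof.
have := nn_ge0 ((t%:C)%C *: u - v); rewrite nnB nnZ ReipZ /nsq !cE; lra.
Qed.

Definition hn u := Num.sqrt (nn u).
Lemma hn_ge0 u : 0 <= hn u. Proof. exact: sqrtr_ge0. Qed.
Lemma hn2 u : hn u ^+ 2 = nn u. Proof. by rewrite sqr_sqrtr // nn_ge0. Qed.
Lemma hn_eq0 u : hn u = 0 -> u = 0.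
Proof. by move=> h; apply: nn_eq0; rewrite -hn2 h expr0n. Qed.

Lemma hn0 : hn 0 = 0. Proof. by rewrite /hn /nn ip0 sqrtr0. Qed.

Lemma CS u v : cRe (ip u v) <= hn u * hn v.
Proof.
have [hu|hu] := eqVneq (hn u) 0.
  by rewrite (hn_eq0 hu) ip0 hn0 mul0r.
have [hv|hv] := eqVneq (hn v) 0.
  by rewrite (hn_eq0 hv) ip0r hn0 mulr0.
have pu : 0 < hn u by rewrite lt_neqAle eq_sym hu hn_ge0.
have pv : 0 < hn v by rewrite lt_neqAle eq_sym hv hn_ge0.
have := ip_amgm u v (hn v / hn u); rewrite -!hn2.
have e : hn v / hn u * hn u = hn v by rewrite divfK.
set t := hn v / hn u in e *; set r := cRe (ip u v) => h.
have h' : 2 * t * r <= 2 * hn v ^+ 2.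
  have e2 : t ^+ 2 * hn u ^+ 2 = hn v ^+ 2 by rewrite -e; ring.
  rewrite e2 in h; lra.
have h2 : hn v * r <= hn v * (hn u * hn v).
  have : 2 * t * r * hn u <= 2 * hn v ^+ 2 * hn u by rewrite ler_pM2r.
  have -> : 2 * t * r * hn u = 2 * (t * hn u) * r by ring.
  rewrite e => h3; nra.
by rewrite ler_pM2l in h2.
Qed.

Lemma CSabs u v : `|cRe (ip u v)| <= hn u * hn v /\ `|cIm (ip u v)| <= hn u * hn v.
Proof.
have hnN w : hn (- w) = hn w by rewrite /hn nnN.
have hni w : hn ((- 'i%C) *: w) = hn w.
  by rewrite /hn nnZ /nsq !cE; congr Num.sqrt; lra.
have h1 := CS u v; have h2 := CS (- u) v; have h3 := CS ((- 'i%C) *: u) v.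
have h4 := CS ((- 'i%C) *: (- u)) v.
rewrite hnN ipN ReN in h2; rewrite hni ReipZ !cE in h3.
rewrite hni hnN ReipZ ipN !cE in h4.
split; rewrite ler_norml; apply/andP; split; lra.
Qed.

Lemma hn_triangle u v : hn (u + v) <= hn u + hn v.
Proof.
have h := CS u v.
rewrite -(@ler_pXn2r _ 2) ?nnegrE ?addr_ge0 ?hn_ge0 //.
rewrite hn2 nnD sqrrD -!hn2; lra.
Qed.

Lemma hnZ a u : hn (a *: u) = cnorm a * hn u.
Proof.
rewrite /hn nnZ -cnorm2 sqrtrM ?sqr_ge0 // sqrtr_sqr ger0_norm //.
by case: a => x y /=; rewrite sqrtr_ge0.
Qed.
Lemma hnN u : hn (- u) = hn u. Proof. by rewrite /hn nnN. Qed.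
Lemma hnB u v : hn (u - v) = hn (v - u). Proof. by rewrite -hnN opprB. Qed.


Hypothesis ipC : forall s : nat -> V,
  (forall e : R, 0 < e -> exists N : nat, forall m n : nat,
     (N <= m)%N -> (N <= n)%N -> hn (s m - s n) < e) ->
  exists l : V, forall e : R, 0 < e -> exists N : nat, forall n : nat,
     (N <= n)%N -> hn (s n - l) < e.

Variables (I : choiceType) (f : I -> V) (Af Bf : R).
Hypothesis hA : 0 < Af.
Hypothesis hAB : Af <= Bf.
Definition c x i := ip x (f i).
Definition E (J : set I) x : \bar R := (\esum_(i in J) (nsq (c x i))%:E)%E.
Hypothesis hfr : forall g, ((Af * nn g)%:E <= E setT g)%E /\ (E setT g <= (Bf * nn g)%:E)%E.

Lemma hB : 0 < Bf. Proof. exact: lt_le_trans hA hAB. Qed.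

Lemma fsum_mulr (G : I -> R) (A : set I) k : finite_set A ->
  \sum_(i \in A) (k * G i) = k * \sum_(i \in A) G i.
Proof. by move=> fA; rewrite (fsum_morph G fA (mulr0 k) (mulrDr k)). Qed.

Lemma E_ge0 J x : (0 <= E J x)%E.
Proof. by apply: esum_ge0 => i _; rewrite lee_fin nsq_ge0. Qed.

Lemma E_sub J x (A : set I) : finite_set A -> A `<=` J ->
  ((\sum_(i \in A) nsq (c x i))%:E <= E J x)%E.
Proof. by move=> fA AJ; apply: esum_ge; exists A => //; rewrite fsumEFin. Qed.

Lemma E_mono J x : (E J x <= E setT x)%E.
Proof.
rewrite /E esum_mkcond; apply: le_esum => i _.
by case: ifP => _ //; rewrite lee_fin nsq_ge0.
Qed.

Lemma E_fin J x : E J x \is a fin_num.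
Proof.
rewrite ge0_fin_numE ?E_ge0 //.
apply: (le_lt_trans (E_mono J x)); apply: (le_lt_trans (proj2 (hfr x))).
exact: ltry.
Qed.

Lemma E_le J x : (E J x <= (Bf * nn x)%:E)%E.
Proof. exact: le_trans (E_mono J x) (proj2 (hfr x)). Qed.

Lemma fin_le x (A : set I) : finite_set A ->
  \sum_(i \in A) nsq (c x i) <= Bf * nn x.
Proof.
move=> fA; rewrite -lee_fin; apply: le_trans (proj2 (hfr x)).
exact: E_sub.
Qed.

Lemma amgm_c (a b : R[i]) t : 2 * t * cRe (a * conjc b) <= t ^+ 2 * nsq a + nsq b.
Proof.
case: a => a1 a2; case: b => b1 b2; rewrite /nsq /=.
have := addr_ge0 (sqr_ge0 (t * a1 - b1)) (sqr_ge0 (t * a2 - b2)).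
set u := _ + _ => h.
have -> : t ^+ 2 * (a1 ^+ 2 + a2 ^+ 2) + (b1 ^+ 2 + b2 ^+ 2) =
   u + 2 * t * (a1 * b1 - a2 * - b2) by rewrite /u; ring.
by rewrite lerDr.
Qed.

Lemma Re_fsum (G : I -> R[i]) (A : set I) : finite_set A ->
  cRe (\sum_(i \in A) G i) = \sum_(i \in A) cRe (G i).
Proof. by move=> fA; exact: (fsum_morph (h := @complex.Re R) G fA (Re0 R) (@ReD R)). Qed.
Lemma Im_fsum (G : I -> R[i]) (A : set I) : finite_set A ->
  cIm (\sum_(i \in A) G i) = \sum_(i \in A) cIm (G i).
Proof. by move=> fA; exact: (fsum_morph (h := @complex.Im R) G fA (Im0 R) (@ImD R)). Qed.
Lemma ip_fsum (G : I -> V) (A : set I) w : finite_set A ->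
  ip (\sum_(i \in A) G i) w = \sum_(i \in A) ip (G i) w.
Proof. by move=> fA; exact: (fsum_morph (h := fun v => ip v w) G fA (ip0 w) (fun x y => ipD x y w)). Qed.

Lemma bessel (A : set I) (a : I -> R[i]) : finite_set A ->
  nn (\sum_(i \in A) a i *: f i) <= Bf * \sum_(i \in A) nsq (a i).
Proof.
move=> fA; set y := \sum_(i \in A) a i *: f i.
have e1 : nn y = \sum_(i \in A) cRe (a i * conjc (c y i)).
  rewrite /nn {1}/y ip_fsum // Re_fsum //; apply: eq_fsbigr => i _.
  by rewrite ipZ /c -ipJ.
have h1 : 2 * Bf * nn y <= Bf ^+ 2 * \sum_(i \in A) nsq (a i) + \sum_(i \in A) nsq (c y i).
  rewrite e1 -fsum_mulr // -fsum_mulr // -fsumD //.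
  by apply: fsum_le => // i _; apply: amgm_c.
have h2 := fin_le y fA.
have hb := hB.
have h3 : Bf * nn y <= Bf * (Bf * \sum_(i \in A) nsq (a i)) by nra.
by rewrite ler_pM2l in h3.
Qed.


Definition Fam x i := c x i *: f i.

Lemma sq_lt (a b : R) : 0 <= a -> 0 < b -> a ^+ 2 < b ^+ 2 -> a < b.
Proof. move=> a0 b0 h; nra. Qed.

Lemma hn_lt u e : 0 < e -> nn u < e ^+ 2 -> hn u < e.
Proof. by move=> e0 h; apply: sq_lt; rewrite ?hn_ge0 ?hn2. Qed.

Lemma approx J x d : 0 < d -> exists A0, [/\ finite_set A0, A0 `<=` J &
  forall A, finite_set A -> A `<=` J ->
    \sum_(i \in A) nsq (c x i) <= \sum_(i \in A0) nsq (c x i) + d].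
Proof.
move=> d0; have Ef := E_fin J x; set s := fine (E J x).
have es : s%:E = E J x by rewrite fineK.
have : ((s - d)%:E < E J x)%E by rewrite -es lte_fin ltrBlDr ltrDl.
move=> /ereal_sup_gt [y [A0 [fA0 A0J] <-]] hy.
exists A0; split => // A fA AJ.
rewrite fsumEFin // lte_fin in hy.
have : ((\sum_(i \in A) nsq (c x i))%:E <= s%:E)%E by rewrite es; exact: E_sub.
rewrite lee_fin => h; lra.
Qed.

Lemma tail J x d : 0 < d -> exists A0, [/\ finite_set A0, A0 `<=` J &
  forall A' A, finite_set A -> A0 `<=` A' -> A' `<=` A -> A `<=` J ->
    nn (\sum_(i \in A) Fam x i - \sum_(i \in A') Fam x i) <= Bf * d].
Proof.
move=> d0; have [A0 [fA0 A0J HA0]] := approx J x d0.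
exists A0; split => // A' A fA A0A' A'A AJ.
have fA' : finite_set A' := sub_finite_set A'A fA.
rewrite fsubB //; apply: le_trans (bessel _ (finite_setD _ fA)) _.
rewrite ler_pM2l ?hB //.
rewrite -fsubB //.
have := HA0 A fA AJ; have := fsum_mono (G := fun i => nsq (c x i)) fA' A0A'.
move=> /(_ (fun i _ => nsq_ge0 _)) h1 h2; lra.
Qed.

Definition dl (n : nat) : R := (n.+1%:R)^-1.

Lemma dl_gt0 n : 0 < dl n. Proof. by rewrite /dl invr_gt0 ltr0Sn. Qed.

Lemma dl_small e : 0 < e -> exists N, forall n, (N <= n)%N -> Bf * dl n < e.
Proof.
move=> e0; have h0 : 0 <= Bf / e by rewrite divr_ge0 // ltW // hB.
exists (Num.Def.archi_bound (Bf / e)) => n hn.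
have := archi_boundP h0; rewrite ltr_pdivrMr // => h.
rewrite /dl ltr_pdivrMr ?ltr0Sn //.
apply: (lt_le_trans h); rewrite mulrC ler_pM2l // ler_nat.
by apply: leq_trans hn _.
Qed.

Lemma hs_ex J x : exists v, has_sum ip (Fam x) J v.
Proof.
have Ht n := tail J x (dl_gt0 n).
have [G HG] := choice Ht.
pose fix acc n := if n is m.+1 then acc m `|` G m.+1 else G 0%N.
have accP n : [/\ finite_set (acc n), acc n `<=` J & G n `<=` acc n].
  elim: n => [|n [h1 h2 h3]] /=; first by case: (HG 0%N) => g1 g2 _; split.
  case: (HG n.+1) => g1 g2 _; split.
  - by rewrite finite_setU.
  - by move=> i [];[apply: h2|apply: g2].
  - exact: subsetUr.
have accM n m : (n <= m)%N -> acc n `<=` acc m.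
  elim: m => [|m IH]; first by rewrite leqn0 => /eqP ->.
  rewrite leq_eqVlt => /orP[/eqP -> //|/IH h].
  by apply: subset_trans h _; apply: subsetUl.
pose s n := \sum_(i \in acc n) Fam x i.
have sC n m : (n <= m)%N -> nn (s m - s n) <= Bf * dl n.
  move=> nm; case: (accP m) => fm mJ _; case: (accP n) => _ _ gn.
  by case: (HG n) => _ _ /(_ (acc n) (acc m) fm gn (accM _ _ nm) mJ).
have [l Hl] : exists l, forall e, 0 < e -> exists N, forall n,
     (N <= n)%N -> hn (s n - l) < e.
  apply: ipC => e e0.
  have e20 : 0 < e ^+ 2 by rewrite exprn_gt0.
  have [N HN] := dl_small e20; exists N => m n hm hn.
  apply: hn_lt => //.
  have [nm|mn] := leqP n m.
    by apply: le_lt_trans (sC _ _ nm) (HN _ hn).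
  rewrite /nn -[s m - s n]opprB -/(nn _) nnN.
  exact: le_lt_trans (sC _ _ (ltnW mn)) (HN _ hm).
exists l => e e0.
have e2 : 0 < e / 2 by rewrite divr_gt0.
have e22 : 0 < (e / 2) ^+ 2 by rewrite exprn_gt0.
have [N1 HN1] := dl_small e22.
have [N2 HN2] := Hl _ e2.
set k := maxn N1 N2.
case: (accP k) => fk kJ gk.
exists (acc k); split => // A fA kA AJ.
rewrite /hnorm -/(nn _) -/(hn _).
have h1 : hn (s k - l) < e / 2 by apply: HN2; rewrite leq_maxr.
have h2 : hn (\sum_(i \in A) Fam x i - s k) < e / 2.
  apply: hn_lt => //; apply: le_lt_trans (HN1 k (leq_maxl _ _)).
  by case: (HG k) => _ _ /(_ (acc k) A fA gk kA AJ).
have := hn_triangle (l - s k) (s k - \sum_(i \in A) Fam x i).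
rewrite addrA subrK => h3.
rewrite hnB in h1; rewrite hnB in h2; lra.
Qed.


Lemma hnormE u : hnorm ip u = hn u. Proof. by []. Qed.

Lemma small0 (a : R) : 0 <= a -> (forall e, 0 < e -> a <= e) -> a = 0.
Proof.
move=> a0 h; apply/eqP; rewrite eq_le a0 andbT.
by apply/ler_addgt0Pr => e e0; rewrite add0r; apply: h.
Qed.

Lemma hs_unique (F : I -> V) J v w : has_sum ip F J v -> has_sum ip F J w -> v = w.
Proof.
move=> hv hw; apply/eqP; rewrite -subr_eq0; apply/eqP; apply: hn_eq0.
apply: small0; first exact: hn_ge0.
move=> e e0; have e2 : 0 < e / 2 by rewrite divr_gt0.
have [A0 [f0 J0 H0]] := hv _ e2; have [A1 [f1 J1 H1]] := hw _ e2.
have fA : finite_set (A0 `|` A1) by rewrite finite_setU.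
have AJ : A0 `|` A1 `<=` J by move=> i [];[apply: J0|apply: J1].
have h0 := H0 _ fA (@subsetUl _ _ _) AJ; have h1 := H1 _ fA (@subsetUr _ _ _) AJ.
rewrite !hnormE in h0 h1.
have := hn_triangle (v - \sum_(i \in A0 `|` A1) F i) (\sum_(i \in A0 `|` A1) F i - w).
rewrite addrA subrK (hnB (\sum_(i \in A0 `|` A1) F i) w) => h; lra.
Qed.

Lemma hs_lin (F G : I -> V) J v w a : has_sum ip F J v -> has_sum ip G J w ->
  has_sum ip (fun i => a *: F i + G i) J (a *: v + w).
Proof.
move=> hv hw e e0.
have k0 : 0 < cnorm a + 1 by apply: ltr_wpDl => //; case: (a) => x y /=; exact: sqrtr_ge0.
set e' := e / (cnorm a + 1).
have e'0 : 0 < e' by rewrite divr_gt0.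
have [A0 [f0 J0 H0]] := hv _ e'0; have [A1 [f1 J1 H1]] := hw _ e'0.
have fA : finite_set (A0 `|` A1) by rewrite finite_setU.
exists (A0 `|` A1); split => //; first by move=> i [];[apply: J0|apply: J1].
move=> A fA' sA AJ.
have h0 := H0 _ fA' (subset_trans (@subsetUl _ _ _) sA) AJ.
have h1 := H1 _ fA' (subset_trans (@subsetUr _ _ _) sA) AJ.
rewrite !hnormE in h0 h1 *.
rewrite fsumD // fsumZ //.
have -> : a *: v + w - (a *: \sum_(i \in A) F i + \sum_(i \in A) G i) =
  a *: (v - \sum_(i \in A) F i) + (w - \sum_(i \in A) G i).
  by rewrite scalerBr opprD addrACA.
apply: le_lt_trans (hn_triangle _ _) _; rewrite hnZ.
have na : 0 <= cnorm a by case: (a) => x y /=; exact: sqrtr_ge0.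
have : cnorm a * hn (v - \sum_(i \in A) F i) <= cnorm a * e'.
  by rewrite ler_wpM2l // ltW.
have -> : e = (cnorm a + 1) * e' by rewrite /e' mulrC divfK // gt_eqF.
move=> h; lra.
Qed.

Lemma hs_union (F : I -> V) J v w : has_sum ip F J v -> has_sum ip F (~` J) w ->
  has_sum ip F setT (v + w).
Proof.
move=> hv hw e e0; have e2 : 0 < e / 2 by rewrite divr_gt0.
have [A0 [f0 J0 H0]] := hv _ e2; have [A1 [f1 J1 H1]] := hw _ e2.
have fA : finite_set (A0 `|` A1) by rewrite finite_setU.
exists (A0 `|` A1); split => // A fA' sA _.
have fAJ : finite_set (A `&` J) by apply: finite_setIl.
have fAJc : finite_set (A `&` ~` J) by apply: finite_setIl.
have h0 := H0 (A `&` J) fAJ (fun i h => conj (sA i (or_introl h)) (J0 i h)) (@subIsetr _ _ _).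
have h1 := H1 (A `&` ~` J) fAJc (fun i h => conj (sA i (or_intror h)) (J1 i h)) (@subIsetr _ _ _).
rewrite !hnormE in h0 h1 *.
rewrite (fsbigID J A) //.
have -> : v + w - (\sum_(i \in A `&` J) F i + \sum_(i \in A `&` ~` J) F i) =
  (v - \sum_(i \in A `&` J) F i) + (w - \sum_(i \in A `&` ~` J) F i).
  by rewrite opprD addrACA.
apply: le_lt_trans (hn_triangle _ _) _; lra.
Qed.

Definition SJ J x := frame_op_on ip f J x.

Lemma SJ_hs J x : has_sum ip (Fam x) J (SJ J x).
Proof. exact: (xgetPex 0 (hs_ex J x)). Qed.

Lemma SJ_lin J a x y : SJ J (a *: x + y) = a *: SJ J x + SJ J y.
Proof.
apply: (hs_unique (SJ_hs J _)).
have -> : Fam (a *: x + y) = fun i => a *: Fam x i + Fam y i.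
  by apply: funext => i; rewrite /Fam /c ipL scalerDl scalerA.
exact: hs_lin (SJ_hs _ _) (SJ_hs _ _).
Qed.

Lemma SJ_union J x : SJ setT x = SJ J x + SJ (~` J) x.
Proof. exact: hs_unique (SJ_hs _ _) (hs_union (SJ_hs J x) (SJ_hs _ x)). Qed.

Lemma SJ0 J : SJ J 0 = 0.
Proof.
have h := SJ_lin J 1 0 0; rewrite !scale1r addr0 in h.
have : SJ J 0 + SJ J 0 - SJ J 0 = SJ J 0 - SJ J 0 by rewrite -h.
by rewrite addrK subrr.
Qed.
Lemma SJD J x y : SJ J (x + y) = SJ J x + SJ J y.
Proof. by have := SJ_lin J 1 x y; rewrite !scale1r. Qed.
Lemma SJZ J a x : SJ J (a *: x) = a *: SJ J x.
Proof. by have := SJ_lin J a x 0; rewrite !addr0 SJ0 addr0. Qed.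
Lemma SJB J x y : SJ J (x - y) = SJ J x - SJ J y.
Proof. by rewrite SJD -scaleN1r SJZ scaleN1r. Qed.

Lemma weak x J v y e : has_sum ip (Fam x) J v -> 0 < e ->
  exists A0, [/\ finite_set A0, A0 `<=` J &
   forall A, finite_set A -> A0 `<=` A -> A `<=` J ->
   `|cRe (ip v y) - \sum_(i \in A) cRe (c x i * conjc (c y i))| <= e /\
   `|cIm (ip v y) - \sum_(i \in A) cIm (c x i * conjc (c y i))| <= e].
Proof.
move=> hv e0.
have k0 : 0 < hn y + 1 by apply: ltr_wpDl => //; exact: hn_ge0.
have e'0 : 0 < e / (hn y + 1) by rewrite divr_gt0.
have [A0 [f0 J0 H0]] := hv _ e'0.
exists A0; split => // A fA sA AJ.
have h := H0 A fA sA AJ; rewrite !hnormE in h.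
have eq1 : ip (v - \sum_(i \in A) Fam x i) y = ip v y - \sum_(i \in A) (c x i * conjc (c y i)).
  rewrite ipB ip_fsum //; congr (_ - _); apply: eq_fsbigr => i _.
  by rewrite /Fam ipZ /c -ipJ.
have [h1 h2] := CSabs (v - \sum_(i \in A) Fam x i) y.
rewrite eq1 ReB ImB Re_fsum // Im_fsum // in h1 h2.
have b : hn (v - \sum_(i \in A) Fam x i) * hn y <= e.
  have hy := hn_ge0 y.
  have : hn (v - \sum_(i \in A) Fam x i) * (hn y + 1) <= e.
    by rewrite -ler_pdivlMr // ltW.
  have := hn_ge0 (v - \sum_(i \in A) Fam x i); nra.
split; [exact: le_trans h1 b|exact: le_trans h2 b].
Qed.

Lemma esum_net J (a : I -> R) s : (forall i, J i -> 0 <= a i) ->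
  (forall e, 0 < e -> exists A0, [/\ finite_set A0, A0 `<=` J &
    forall A, finite_set A -> A0 `<=` A -> A `<=` J -> `|s - \sum_(i \in A) a i| <= e]) ->
  (\esum_(i in J) (a i)%:E)%E = s%:E.
Proof.
move=> a0 h.
have up : (\esum_(i in J) (a i)%:E <= s%:E)%E.
  apply: ge_ereal_sup => y [X [fX XJ] <-]; rewrite fsumEFin // lee_fin.
  apply/ler_addgt0Pr => e e0.
  have [A0 [f0 J0 H0]] := h e e0.
  have fA : finite_set (X `|` A0) by rewrite finite_setU.
  have AJ : X `|` A0 `<=` J by move=> i [];[apply: XJ|apply: J0].
  have := H0 _ fA (@subsetUr _ _ _) AJ.
  have := fsum_mono (G := a) fA (@subsetUl _ _ _) (fun i hi => a0 i (AJ i hi)).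
  rewrite ler_norml => h1 /andP[h2 h3]; lra.
have ge0 : (0 <= \esum_(i in J) (a i)%:E)%E by apply: esum_ge0 => i /a0; rewrite lee_fin.
have fin : \esum_(i in J) (a i)%:E \is a fin_num.
  by rewrite ge0_fin_numE // (le_lt_trans up) // ltry.
rewrite -(fineK fin) in up *; rewrite lee_fin in up.
congr (_%:E); apply/eqP; rewrite eq_le up /=.
apply/ler_addgt0Pr => e e0.
have [A0 [f0 J0 H0]] := h e e0.
have := H0 _ f0 (@subset_refl _ _) J0.
have : ((\sum_(i \in A0) a i)%:E <= \esum_(i in J) (a i)%:E)%E.
  by apply: esum_ge; exists A0 => //; rewrite fsumEFin.
rewrite -(fineK fin) lee_fin ler_norml => h1 /andP[h2 h3]; lra.
Qed.


Lemma nsq_conj (z : R[i]) : cRe (z * conjc z) = nsq z /\ cIm (z * conjc z) = 0.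
Proof. by case: z => a b; rewrite /nsq /=; split; ring. Qed.

Lemma SJ_self J x : E J x = (cRe (ip (SJ J x) x))%:E /\ cIm (ip (SJ J x) x) = 0.
Proof.
have hv := SJ_hs J x; split.
  apply: esum_net => [i _|e e0]; first exact: nsq_ge0.
  have [A0 [f0 J0 H0]] := weak x hv e0.
  exists A0; split => // A fA sA AJ; have [h _] := H0 A fA sA AJ.
  suff <- : \sum_(i \in A) cRe (c x i * conjc (c x i)) = \sum_(i \in A) nsq (c x i) by [].
  by apply: eq_fsbigr => i _; rewrite (proj1 (nsq_conj _)).
apply/normr0_eq0/small0 => // e e0.
have [A0 [f0 J0 H0]] := weak x hv e0.
have [_ h] := H0 A0 f0 (@subset_refl _ _) J0.
suff e1 : \sum_(i \in A0) cIm (c x i * conjc (c x i)) = 0 by rewrite e1 subr0 in h.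
by apply: fsbig1 => i _; rewrite (proj2 (nsq_conj _)).
Qed.

Definition S x := SJ setT x.
Definition Q x := cRe (ip (S x) x).

Lemma S_frame x : Af * nn x <= Q x /\ Q x <= Bf * nn x.
Proof. by have [h1 h2] := hfr x; rewrite (proj1 (SJ_self _ x)) !lee_fin in h1 h2. Qed.

Lemma S_ImQ x : cIm (ip (S x) x) = 0.
Proof. exact: (proj2 (SJ_self _ x)). Qed.

Lemma S_sa x y : ip (S x) y = ip x (S y).
Proof.
have h1 := S_ImQ (x + y).
have h2 := S_ImQ (x + 'i%C *: y).
rewrite /S SJD !ipD !ipDr !ImD -/(S x) -/(S y) !S_ImQ in h1.
rewrite /S SJD SJZ !ipD !ipDr ipZ !ipZr ipZ !ImD !ImM -/(S x) -/(S y) in h2.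
rewrite !cE S_ImQ (S_ImQ y) in h2.
rewrite [ip x (S y)]ipJ; apply: cplx_eq; rewrite ?ReJ ?ImJ.
  have := ReJip (S y) y; have := ImJip (S y) y.
  rewrite (S_ImQ y); lra.
lra.
Qed.

Lemma S_bound x : nn (S x) <= Bf * Q x.
Proof.
set u := S x.
apply/ler_addgt0Pr => e e0.
have e2 : 0 < e / 2 by rewrite divr_gt0.
have [A0 [f0 J0 H0]] := weak u (SJ_hs setT x) e2.
have [h _] := H0 A0 f0 (@subset_refl _ _) J0.
have h1 : 2 * Bf * \sum_(i \in A0) cRe (c x i * conjc (c u i)) <=
   Bf ^+ 2 * \sum_(i \in A0) nsq (c x i) + \sum_(i \in A0) nsq (c u i).
  rewrite -fsum_mulr // -fsum_mulr // -fsumD //.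
  by apply: fsum_le => // i _; apply: amgm_c.
have h2 := fin_le u f0.
have h3 : \sum_(i \in A0) nsq (c x i) <= Q x.
  rewrite -lee_fin /Q -(proj1 (SJ_self _ x)); exact: E_sub.
have hb := hB.
rewrite ler_norml in h; case/andP: h => h4 h5.
rewrite -/(nn u) in h4 h5.
have h6 : Bf * (2 * nn u) <= Bf * (Bf * Q x + 2 * (e / 2) + nn u).
  have h7 : Bf ^+ 2 * \sum_(i \in A0) nsq (c x i) <= Bf ^+ 2 * Q x.
    by rewrite ler_pM2l // exprn_gt0.
  nra.
rewrite ler_pM2l // in h6.
have -> : e = 2 * (e / 2) by rewrite mulrC divfK.
lra.
Qed.

Lemma S_bound2 x : nn (S x) <= Bf ^+ 2 * nn x.
Proof.
apply: le_trans (S_bound x) _; rewrite expr2 -mulrA ler_pM2l ?hB //.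
exact: (proj2 (S_frame x)).
Qed.


Lemma geo_small (q : R) : 0 <= q -> q < 1 -> forall e : R, 0 < e -> exists N : nat, q ^+ N < e.
Proof.
move=> q0 q1 e e0.
have := @cvg_geometric R 1 q. rewrite ger0_norm // => /(_ q1).
move/cvgrPdist_lt => /(_ e e0) [N _ HN].
exists N. have := HN N (leqnn N). rewrite /geometric /= mul1r sub0r normrN ger0_norm //.
exact: exprn_ge0.
Qed.

Lemma geo_mono (q : R) n m : 0 <= q -> q <= 1 -> (n <= m)%N -> q ^+ m <= q ^+ n.
Proof.
move=> q0 q1 /subnK <-; elim: (m - n)%N => [|k IH]; first by rewrite add0n.
rewrite addSn exprS; apply: le_trans IH; rewrite ler_piMl // exprn_ge0 //.
Qed.

Lemma S0 : S 0 = 0. Proof. exact: SJ0. Qed.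
Lemma SD x y : S (x + y) = S x + S y. Proof. exact: SJD. Qed.
Lemma SB x y : S (x - y) = S x - S y. Proof. exact: SJB. Qed.
Lemma SZ a x : S (a *: x) = a *: S x. Proof. exact: SJZ. Qed.

Lemma S_inj x y : S x = S y -> x = y.
Proof.
move=> h; apply/eqP; rewrite -subr_eq0; apply/eqP; apply: nn_eq0.
have [h1 _] := S_frame (x - y).
rewrite /Q SB h subrr ip0 in h1.
have := nn_ge0 (x - y); have := hA; simpl in h1; nra.
Qed.

Lemma hnS x : hn (S x) <= Bf * hn x.
Proof.
have e : Bf * hn x = Num.sqrt (Bf ^+ 2 * nn x).
  by rewrite sqrtrM ?sqr_ge0 // sqrtr_sqr ger0_norm // ltW // hB.
rewrite e /hn ler_sqrt; first exact: S_bound2.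
by rewrite mulr_ge0 ?sqr_ge0 ?nn_ge0.
Qed.

Lemma step r : nn (r - (Bf^-1)%:C%C *: S r) <= (1 - Af / Bf) * nn r.
Proof.
have hb := hB; set b := Bf^-1.
have bB : b * Bf = 1 by rewrite mulVf // gt_eqF.
have b0 : 0 < b by rewrite invr_gt0.
rewrite nnB nnZ ipZr /nsq !cE oppr0 mul0r subr0 expr0n addr0 /=.
have e1 : cRe (ip r (S r)) = Q r by rewrite /Q ReJip.
rewrite e1.
have [h1 _] := S_frame r.
have h2 := S_bound r.
have h3 : b ^+ 2 * nn (S r) <= b ^+ 2 * (Bf * Q r) by rewrite ler_pM2l // exprn_gt0.
have e2 : b ^+ 2 * (Bf * Q r) = b * Q r by rewrite expr2 -mulrA (mulrA b Bf) bB mul1r.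
have h4 : b * (Af * nn r) <= b * Q r by rewrite ler_pM2l.
rewrite e2 in h3.
have e3 : (1 - Af * b) * nn r = nn r - b * (Af * nn r) by ring.
rewrite e3; lra.
Qed.

Lemma S_surj y : exists x, S x = y.
Proof.
have hb := hB; set b := Bf^-1.
have b0 : 0 < b by rewrite invr_gt0.
set p := 1 - Af / Bf.
have p0 : 0 <= p by rewrite subr_ge0 ler_pdivrMr // mul1r.
have p1 : p < 1 by rewrite /p ltrBlDr ltrDl divr_gt0.
set q := Num.sqrt p.
have q0 : 0 <= q := sqrtr_ge0 p.
have qq : q ^+ 2 = p by rewrite sqr_sqrtr.
have q1 : q < 1 by nra.
pose fix xs n := if n is m.+1 then xs m + b%:C%C *: (y - S (xs m)) else 0.
pose r n := y - S (xs n).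
have rS n : r n.+1 = r n - b%:C%C *: S (r n).
  by rewrite /r /= (SD (xs n)) SZ opprD addrA.
have hr n : hn (r n) <= q ^+ n * hn y.
  elim: n => [|n IH]; first by rewrite /r /= S0 subr0 expr0 mul1r.
  have h1 : hn (r n.+1) <= q * hn (r n).
    rewrite rS /hn /q -sqrtrM // ler_sqrt ?mulr_ge0 ?nn_ge0 //.
    exact: step.
  apply: le_trans h1 _; rewrite exprS -mulrA ler_wpM2l //.
set K := b * hn y / (1 - q).
have K0 : 0 <= K by rewrite /K divr_ge0 ?mulr_ge0 ?hn_ge0 ?ltW // subr_gt0.
have hx n k : hn (xs (n + k)%N - xs n) <= K * (q ^+ n - q ^+ (n + k)).
  elim: k => [|k IH]; first by rewrite addn0 subrr hn0 subrr mulr0.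
  rewrite addnS /= (addrC (xs (n + k)%N)) -addrA -/(r _).
  apply: le_trans (hn_triangle _ _) _.
  rewrite hnZ (_ : cnorm (b%:C)%C = b); last first.
    by rewrite /= expr0n addr0 sqrtr_sqr ger0_norm // ltW.
  have h2 := hr (n + k)%N.
  have h3 : b * hn (r (n + k)%N) <= b * (q ^+ (n + k) * hn y) by rewrite ler_pM2l.
  have e1 : K * (q ^+ n - q ^+ (n + k).+1) = K * (q ^+ n - q ^+ (n + k)) + b * (q ^+ (n + k) * hn y).
    rewrite /K exprS; field; rewrite subr_eq0; apply/eqP => h; rewrite h in q1; lra.
  rewrite e1; lra.
have hx' n m : (n <= m)%N -> hn (xs m - xs n) <= K * q ^+ n.
  move=> /subnK <-; rewrite addnC; apply: le_trans (hx n (m - n)%N) _.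
  by rewrite ler_wpM2l // lerBlDr lerDl exprn_ge0.
have [xl Hxl] : exists xl, forall e, 0 < e -> exists N, forall n,
     (N <= n)%N -> hn (xs n - xl) < e.
  apply: ipC => e e0.
  have eK : 0 < e / (K + 1) by rewrite divr_gt0 // ltr_wpDl.
  have [N HN] := geo_small q0 q1 eK.
  exists N => m n hm hn.
  have key k : (N <= k)%N -> K * q ^+ k < e.
    move=> hk; have := geo_mono q0 (ltW q1) hk => h.
    have h5 : q ^+ k < e / (K + 1) by apply: le_lt_trans h HN.
    rewrite ltr_pdivlMr ?ltr_wpDl // in h5.
    have := exprn_ge0 k q0; nra.
  have [nm|mn] := leqP n m.
    exact: le_lt_trans (hx' _ _ nm) (key _ hn).
  rewrite hnB; exact: le_lt_trans (hx' _ _ (ltnW mn)) (key _ hm).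
exists xl; apply/eqP; rewrite -subr_eq0 -oppr_eq0 opprB; apply/eqP.
apply: hn_eq0; apply: small0 => [|e e0]; first exact: hn_ge0.
have e2 : 0 < e / 2 / (hn y + 1) by rewrite !divr_gt0 // ltr_wpDl // hn_ge0.
have e3 : 0 < e / 2 / Bf by rewrite !divr_gt0.
have [N1 HN1] := geo_small q0 q1 e2.
have [N2 HN2] := Hxl _ e3.
set n := maxn N1 N2.
have h1 : hn (r n) <= e / 2.
  apply: le_trans (hr n) _.
  have := geo_mono q0 (ltW q1) (leq_maxl N1 N2) => h.
  have h5 : q ^+ n < e / 2 / (hn y + 1) by apply: le_lt_trans h HN1.
  rewrite ltr_pdivlMr ?ltr_wpDl ?hn_ge0 // in h5.
  have := exprn_ge0 n q0; have := hn_ge0 y; nra.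
have h2 : hn (S (xs n - xl)) <= e / 2.
  apply: le_trans (hnS _) _.
  have := HN2 n (leq_maxr N1 N2); rewrite ltr_pdivlMr // => h.
  rewrite mulrC; exact: ltW.
have := hn_triangle (r n) (S (xs n - xl)).
have -> : r n + S (xs n - xl) = y - S xl by rewrite /r SB addrA subrK.
move=> h3; lra.
Qed.


Definition T y := op_inv (frame_op ip f) y.

Lemma ST y : S (T y) = y.
Proof. exact: (xgetPex 0 (S_surj y)). Qed.
Lemma TS x : T (S x) = x.
Proof. by apply: S_inj; rewrite ST. Qed.
Lemma T_sa u v : ip u (T v) = ip (T u) v.
Proof. by rewrite -{1}(ST u) S_sa ST. Qed.
Lemma TD u v : T (u + v) = T u + T v.
Proof. by apply: S_inj; rewrite SD !ST. Qed.

Lemma E_eq J x : sq_coef_sum ip f J x = E J x.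
Proof. by apply: eq_esum => i _; rewrite cnorm2. Qed.

Lemma Edual h : sq_coef_sum ip (canonical_dual ip f) setT h = (cRe (ip h (T h)))%:E.
Proof.
have -> : sq_coef_sum ip (canonical_dual ip f) setT h = E setT (T h).
  by apply: eq_esum => i _; rewrite cnorm2 /c -T_sa.
by rewrite (proj1 (SJ_self _ _)) -/(S _) ST.
Qed.

Lemma main J g :
  (sq_coef_sum ip f J g
       - sq_coef_sum ip (canonical_dual ip f) setT (frame_op_on ip f J g)
     = sq_coef_sum ip f (~` J) g
       - sq_coef_sum ip (canonical_dual ip f) setT (frame_op_on ip f (~` J) g))%E.
Proof.
rewrite !E_eq !Edual -/(SJ J g) -/(SJ (~` J) g).
rewrite (proj1 (SJ_self J g)) (proj1 (SJ_self (~` J) g)) -!EFinB.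
congr (_%:E).
set a := SJ J g; set b := SJ (~` J) g.
have hab : T a + T b = g by rewrite -TD /a /b -SJ_union -/(S g) TS.
rewrite -hab !ipDr !ReD.
have : cRe (ip a (T b)) = cRe (ip b (T a)) by rewrite T_sa ReJip T_sa.
lra.
Qed.

End IP.

Theorem theorem3p1 (R : realType) (V : lmodType R[i]) (ip : V -> V -> R[i])
  (I : choiceType) (f : I -> V) :
  is_hilbert ip -> is_frame ip f ->
  forall (J : set I) (g : V),
    (sq_coef_sum ip f J g
       - sq_coef_sum ip (canonical_dual ip f) setT (frame_op_on ip f J g)
     = sq_coef_sum ip f (~` J) g
       - sq_coef_sum ip (canonical_dual ip f) setT (frame_op_on ip f (~` J) g))%E.
Proof.
move=> [hL hJ hP hE hC] [Af [Bf [hA hAB hfr]]] J g.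
apply: (@main R V ip hL hJ hP hE hC I f Af Bf hA hAB).
move=> x; rewrite -!E_eq -(hn2 hP x); exact: hfr x.
Qed.
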